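(* Let $X$ be a random variable with distribution $P$ on $\mathbb{Z}_+$ and mean $\lambda>0$, and let $\mathrm{Po}_\lambda(x)=e^{-\lambda}\lambda^x/x!$. Let $\mu=\sum_{x\ge0}\sqrt{P(x)\mathrm{Po}_\lambda(x)}$. Then $1-\mu^2\le K(X)$, and consequently $$\sum_{x\ge0}\Big(\sqrt{P(x)}-\sqrt{\mathrm{Po}_\lambda(x)}\Big)^2=2-2\mu\le 2K(X).$$
   Context: For $X$ with distribution $P$ on $\mathbb{Z}_+$ and mean $\lambda>0$, the scaled Fisher information is $K(X)=\lambda\sum_{x\ge0}\frac{\big(\frac{(x+1)P(x+1)}{\lambda}-P(x)\big)^2}{P(x)}$ (equivalently $\lambda E[\rho_X(X)^2]$ with $\rho_X(x)=\frac{(x+1)P(x+1)}{\lambda P(x)}-1$), with conventions $0/0=0$, $c/0=\infty$ for $c>0$. *)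

(* Defs.v *)
From Stdlib Require Import Reals Lra ClassicalDescription.
From Coquelicot Require Import Coquelicot.
Open Scope R_scope.

Definition Po (lam : R) (x : nat) : R := exp (- lam) * lam ^ x / INR (Factorial.fact x).

Definition is_pmf_mean (P : nat -> R) (lam : R) : Prop :=
  (forall x, 0 <= P x) /\ is_series P 1 /\ is_series (fun x => INR x * P x) lam.

(* Summand of K(X)/lam, with 0/0 = 0 (finite part; the c/0 case is
   handled in scaledFisher). *)
Definition fisher_term (P : nat -> R) (lam : R) (x : nat) : R :=
  if Req_EM_T (P x) 0 then 0
  else ((INR (x + 1) * P (x + 1)%nat / lam - P x) ^ 2) / P x.

(* Scaled Fisher information K(X) as an extended real:
   +oo if some term is c/0 with c > 0 (i.e. P x = 0 and P (x+1) <> 0),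
   +oo if the (nonnegative) series diverges, otherwise lam * sum. *)
Definition scaledFisher (P : nat -> R) (lam : R) : Rbar :=
  if excluded_middle_informative (exists x : nat, P x = 0 /\ P (x + 1)%nat <> 0)
  then p_infty
  else if excluded_middle_informative (ex_series (fisher_term P lam))
       then Finite (lam * Series (fisher_term P lam))
       else p_infty.

Definition hell_aff (P : nat -> R) (lam : R) : R :=
  Series (fun x => sqrt (P x * Po lam x)).

(* Main.v *)
Require Import Defs.
From Stdlib Require Import Reals Lra ClassicalDescription.
From Coquelicot Require Import Coquelicot.
Open Scope R_scope.

Module FinPart.
From mathcomp Require Import all_boot all_order all_algebra.
From mathcomp Require Import ring lra.
From mathcomp Require Import Rstruct.
Set Implicit Arguments. Unset Strict Implicit. Unset Printing Implicit Defensive.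
Import Order.TTheory GRing.Theory Num.Theory.
Local Open Scope ring_scope.

Section Fin.
Variable R : realFieldType.
Implicit Types (p g u c d : nat -> R).


Lemma var_pairs p g N : (\sum_(0<=x<N) p x * g x ^+ 2) * (\sum_(0<=x<N) p x)
   - (\sum_(0<=x<N) p x * g x) ^+ 2 =
   \sum_(0<=y<N) \sum_(0<=x<y) p x * p y * (g y - g x) ^+ 2.
Proof.
elim: N => [|N IH]; first by rewrite !big_geq //; ring.
rewrite !big_nat_recr //= -IH.
have E: \sum_(0<=x<N) p x * p N * (g N - g x)^+2 =
  p N * (\sum_(0<=x<N) p x * g x ^+ 2) + p N * g N ^+2 * (\sum_(0<=x<N) p x)
  - 2 * p N * g N * (\sum_(0<=x<N) p x * g x).
  by rewrite !mulr_sumr -big_split -sumrB /=; apply: eq_bigr => i _; ring.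
rewrite E; ring.
Qed.

Lemma CS (s : seq nat) c d : (forall i, 0 <= c i) ->
  (\sum_(i <- s) c i * d i) ^+ 2 <= (\sum_(i <- s) c i) * (\sum_(i <- s) c i * d i ^+ 2).
Proof.
move=> c0; elim: s => [|a s IH]; first by rewrite !big_nil; lra.
rewrite !big_cons.
set A := \sum_(i <- s) c i * d i in IH *.
set C := \sum_(i <- s) c i in IH *.
set D := \sum_(i <- s) c i * d i ^+ 2 in IH *.
have C0 : 0 <= C by apply: sumr_ge0.
have D0 : 0 <= D by apply: sumr_ge0 => i _; apply: mulr_ge0 => //; apply: sqr_ge0.
have ca := c0 a.
have key : 2 * A * d a <= C * d a ^+ 2 + D.
  have [Cz|Cp] := eqVneq C 0.
    have A0 : A = 0 by apply/eqP; rewrite -sqrf_eq0 eq_le sqr_ge0 andbT; rewrite Cz mul0r in IH.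
    by rewrite A0 Cz; lra.
  have Cpos : 0 < C by rewrite lt_def Cp C0.
  have h1 : 0 <= C * (C * d a ^+ 2 + D - 2 * A * d a).
    have -> : C * (C * d a ^+ 2 + D - 2 * A * d a) = (C * d a - A) ^+ 2 + (C * D - A ^+ 2) by ring.
    apply: addr_ge0; first exact: sqr_ge0.
    by rewrite subr_ge0.
  rewrite pmulr_rge0 // in h1; lra.
nra.
Qed.

Lemma tele_cond x y N u : (x <= y)%N -> (y <= N)%N ->
  \sum_(0<=k<N) (if (x <= k < y)%N then u k else 0) = \sum_(x<=k<y) u k.
Proof.
move=> xy yN.
rewrite (@big_cat_nat _ _ _ x 0 N) //; last exact: leq_trans yN.
rewrite (@big_cat_nat _ _ _ y x N) //=.
have E1 : \sum_(0 <= i < x) (if (x <= i < y)%N then u i else 0) = 0.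
  rewrite big_nat_cond; apply: big1 => i H.
  case/andP: H => H _; case/andP: H => _ hi; by rewrite leqNgt hi.
have E3 : \sum_(y <= i < N) (if (x <= i < y)%N then u i else 0) = 0.
  rewrite big_nat_cond; apply: big1 => i H.
  case/andP: H => H _; case/andP: H => hi _; by rewrite ltnNge hi andbF.
rewrite E1 E3 add0r addr0.
apply: eq_big_nat => i H; by rewrite H.
Qed.


Lemma pair_bound g x y N : (x <= y)%N -> (y <= N)%N ->
  (g y - g x) ^+ 2 <= (y%:R - x%:R) *
     \sum_(0<=k<N) (if (x <= k < y)%N then (g k.+1 - g k) ^+ 2 else 0).
Proof.
move=> xy yN.
pose c k : R := if (x <= k < y)%N then 1 else 0.
have c0 : forall k, 0 <= c k by move=> k; rewrite /c; case: ifP => _ //; lra.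
have := CS (index_iota 0 N) (fun k => g k.+1 - g k) c0.
have -> : \sum_(i <- index_iota 0 N) c i * (g i.+1 - g i) = g y - g x.
  rewrite -(telescope_sumr _ xy) -(@tele_cond x y N _ xy yN).
  by apply: eq_bigr => i _; rewrite /c; case: ifP => _; ring.
have -> : \sum_(i <- index_iota 0 N) c i = y%:R - x%:R.
  have -> : \sum_(i <- index_iota 0 N) c i = \sum_(0 <= i < N) (if (x <= i < y)%N then 1 else 0) by [].
  rewrite (@tele_cond x y N _ xy yN) sumr_const_nat -natrB //.
have -> : \sum_(i <- index_iota 0 N) c i * (g i.+1 - g i) ^+ 2 =
  \sum_(0<=k<N) (if (x <= k < y)%N then (g k.+1 - g k) ^+ 2 else 0).
  by apply: eq_bigr => i _; rewrite /c; case: ifP => _; ring.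
by [].
Qed.

Lemma mean_rec p lam k : (forall n, n.+1%:R * p n.+1 = lam * p n) ->
  \sum_(0 <= x < k.+1) x%:R * p x = lam * \sum_(0 <= x < k) p x.
Proof.
move=> hrec; elim: k => [|k IH]; first by rewrite big_nat1 big_geq // mul0r mulr0.
by rewrite big_nat_recr //= IH big_nat_recr //= hrec mulrDr.
Qed.

Definition Gk p N k := \sum_(0<=y<N) \sum_(0<=x<y)
   (if (x <= k < y)%N then p x * p y * (y%:R - x%:R) else 0).

Lemma Gk_formula p lam k N : (forall n, n.+1%:R * p n.+1 = lam * p n) ->
  Gk p N k = if (k < N)%N then lam * ((\sum_(0<=x<k.+1) p x) * (\sum_(0<=x<N.-1) p x)
        - (\sum_(0<=x<k) p x) * (\sum_(0<=x<N) p x)) else 0.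
Proof.
move=> hrec; elim: N => [|N IH]; first by rewrite /Gk big_geq.
rewrite /Gk big_nat_recr //= -/(Gk p N k) IH.
have [kN|Nk] := ltnP k N.
  have kN1 : (k < N.+1)%N by apply: ltnW.
  rewrite kN1.
  have -> : \sum_(0 <= x < N) (if (x <= k)%N && true then p x * p N * (N%:R - x%:R) else 0)
      = \sum_(0 <= x < k.+1) p x * p N * (N%:R - x%:R).
    rewrite (@big_cat_nat _ _ _ k.+1 0 N) //=.
    have -> : \sum_(k.+1 <= i < N) (if (i <= k)%N && true then p i * p N * (N%:R - i%:R) else 0) = 0.
      rewrite big_nat_cond; apply: big1 => i H.
      case/andP: H => H _; case/andP: H => hi _; by rewrite leqNgt hi.
    rewrite addr0; apply: eq_big_nat => i H; case/andP: H => _ hi.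
    by rewrite -ltnS hi.
  have -> : \sum_(0 <= x < k.+1) p x * p N * (N%:R - x%:R) =
     p N * (N%:R * \sum_(0 <= x < k.+1) p x - \sum_(0 <= x < k.+1) x%:R * p x).
    rewrite mulr_sumr -sumrB mulr_sumr; apply: eq_bigr => i _; ring.
  rewrite (mean_rec _ hrec).
  clear kN1; case: N kN IH => [//|n] kN IH /=.
  rewrite (big_nat_recr n.+1) //= (big_nat_recr n) //=.
  have h := hrec n.
  set A1 := \sum_(0 <= x < k.+1) p x.
  set A0 := \sum_(0 <= x < k) p x.
  set Fn := \sum_(0 <= i < n) p i.
  have h' : A1 * (n.+1%:R * p n.+1) = A1 * (lam * p n) by rewrite h.
  rewrite -(subr0 (_ + _)).
  have -> : (0:R) = A1 * (n.+1%:R * p n.+1) - A1 * (lam * p n) by rewrite h' subrr.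
  ring.
have -> : \sum_(0 <= x < N)
     (if (x <= k)%N && false then p x * p N * (N%:R - x%:R) else 0) = 0.
  by apply: big1 => i _; rewrite andbF.
rewrite add0r.
case: ifP => // kN1.
have kE : k = N by apply/eqP; rewrite eqn_leq Nk -ltnS kN1.
rewrite kE /= big_nat_recr //=; ring.
Qed.

Lemma poincare_fin p g lam N : 0 <= lam -> (forall k, 0 <= p k) ->
  (forall n, n.+1%:R * p n.+1 = lam * p n) ->
  (\sum_(0<=x<N) p x * g x ^+ 2) * (\sum_(0<=x<N) p x)
   - (\sum_(0<=x<N) p x * g x) ^+ 2 <=
  lam * (\sum_(0<=x<N) p x) * \sum_(0<=k<N) p k * (g k.+1 - g k) ^+ 2.
Proof.
move=> lam0 p0 hrec.
rewrite var_pairs.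
set h := fun k => (g k.+1 - g k) ^+ 2.
have h0 : forall k, 0 <= h k by move=> k; apply: sqr_ge0.
pose F x y k := h k * (if (x <= k < y)%N then p x * p y * (y%:R - x%:R) else 0).
apply: (@le_trans _ _ (\sum_(0<=y<N) \sum_(0<=x<y) \sum_(0<=k<N) F x y k)).
  apply: ler_sum_nat => y /andP [_ yN].
  apply: ler_sum_nat => x /andP [_ xy].
  have xy' : (x <= y)%N by apply: ltnW.
  have yN' : (y <= N)%N by apply: ltnW.
  apply: (@le_trans _ _ (p x * p y * ((y%:R - x%:R) *
     \sum_(0<=k<N) (if (x <= k < y)%N then (g k.+1 - g k) ^+ 2 else 0)))).
    apply: ler_wpM2l; first by apply: mulr_ge0.
    exact: pair_bound.
  rewrite !mulr_sumr le_eqVlt; apply/orP; left; apply/eqP.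
  apply: eq_bigr => k _; rewrite /F /h; case: ifP => _; ring.
rewrite [X in X <= _](_ : _ = \sum_(0<=k<N) h k * Gk p N k); last first.
  symmetry; rewrite /Gk.
  under eq_bigr => k _ do rewrite mulr_sumr.
  rewrite exchange_big_nat; apply: eq_bigr => y _.
  under eq_bigr => k _ do rewrite mulr_sumr.
  by rewrite exchange_big_nat.
rewrite mulr_sumr; apply: ler_sum_nat => k /andP [_ kN].
rewrite (Gk_formula _ _ hrec) kN.
case: N kN => [//|n] kN /=.
rewrite (big_nat_recr k) //= (big_nat_recr n) //=.
change ((g k.+1 - g k) ^+ 2) with (h k).
set A0 := \sum_(0 <= i < k) p i.
set Fn := \sum_(0 <= i < n) p i.
have A00 : 0 <= A0 by apply: sumr_ge0.
have pk := p0 k. have pn := p0 n.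
have hk := h0 k.
have H : 0 <= h k * lam * (p k * p n + A0 * p n).
  apply: mulr_ge0; first exact: mulr_ge0.
  by apply: addr_ge0; apply: mulr_ge0.
rewrite -subr_ge0; apply: (le_trans H); rewrite le_eqVlt; apply/orP; left; apply/eqP; ring.
Qed.

End Fin.

Lemma sumE (F : nat -> Rdefinitions.R) N : sum_n F N = \sum_(0 <= i < N.+1) F i.
Proof.
elim: N => [|N IH]; first by rewrite sum_O big_nat1.
by rewrite sum_Sn IH (big_nat_recr N.+1).
Qed.

Lemma poincare_R (p g : nat -> Rdefinitions.R) (lam : Rdefinitions.R) (N : nat) :
  Rle 0 lam -> (forall k, Rle 0 (p k)) ->
  (forall n, Rmult (INR (S n)) (p (S n)) = Rmult lam (p n)) ->
  Rle (Rminus (Rmult (sum_n (fun x => Rmult (p x) (pow (g x) 2)) N) (sum_n p N))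
              (pow (sum_n (fun x => Rmult (p x) (g x)) N) 2))
      (Rmult (Rmult lam (sum_n p N))
             (sum_n (fun k => Rmult (p k) (pow (Rminus (g (S k)) (g k)) 2)) N)).
Proof.
move=> l0 p0 hrec.
rewrite !sumE.
apply/RleP.
have := @poincare_fin Rdefinitions.R p g lam N.+1.
rewrite !RpowE.
have E : forall x y : Rdefinitions.R, Rminus x y = x - y by [].
have e1 : \sum_(0<=i<N.+1) Rmult (p i) (pow (g i) 2) = \sum_(0<=x<N.+1) p x * g x ^+ 2.
  by apply: eq_bigr => i _; rewrite RpowE.
have e2 : \sum_(0<=i<N.+1) Rmult (p i) (pow (Rminus (g i.+1) (g i)) 2) =
   \sum_(0<=k<N.+1) p k * (g k.+1 - g k) ^+ 2.
  by apply: eq_bigr => i _; rewrite RpowE.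
rewrite e1 e2.
apply.
- by apply/RleP.
- by move=> k; apply/RleP.
- by move=> n; rewrite -INRE.
Qed.

End FinPart.

Lemma plusR (x y : R) : plus x y = x + y.
Proof. reflexivity. Qed.

Lemma sum_n_le' (a b : nat -> R) N : (forall k, a k <= b k) -> sum_n a N <= sum_n b N.
Proof.
intros H; induction N as [|N IH].
- rewrite !sum_O; apply H.
- rewrite !sum_Sn, !plusR; apply Rplus_le_compat; auto.
Qed.

Lemma sum_n_nonneg' (a : nat -> R) N : (forall k, 0 <= a k) -> 0 <= sum_n a N.
Proof.
intros H; induction N as [|N IH].
- rewrite sum_O; apply H.
- rewrite sum_Sn, plusR; apply Rplus_le_le_0_compat; auto.
Qed.

Lemma Po_pos lam x : 0 < lam -> 0 < Po lam x.
Proof.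
intros hl; unfold Po. apply Rdiv_lt_0_compat.
- apply Rmult_lt_0_compat; [apply exp_pos | apply pow_lt; exact hl].
- apply INR_fact_lt_0.
Qed.

Lemma Po_rec lam n : 0 < lam -> INR (S n) * Po lam (S n) = lam * Po lam n.
Proof.
intros hl; unfold Po. rewrite fact_simpl, mult_INR. simpl pow.
field. split; [apply INR_fact_neq_0 | apply not_0_INR; discriminate].
Qed.

Lemma Po_series lam : 0 < lam -> is_series (Po lam) 1.
Proof.
intros hl.
pose proof (is_exp_Reals lam) as H. unfold is_pseries in H.
apply (is_series_scal (exp (- lam))) in H.
replace 1 with (scal (exp (- lam)) (exp lam)).
2:{ unfold scal; simpl; unfold mult; simpl. rewrite exp_Ropp. field. apply Rgt_not_eq, exp_pos. }
eapply is_series_ext; [|exact H].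
- intros n; simpl. rewrite pow_n_pow. unfold scal; simpl. unfold mult; simpl.
  unfold Po, Rdiv. ring.
Qed.

Lemma gsq (P : nat -> R) lam x : 0 < lam -> 0 <= P x ->
  Po lam x * (sqrt (P x / Po lam x)) ^ 2 = P x.
Proof.
intros hl hp. pose proof (Po_pos lam x hl) as hq.
rewrite pow2_sqrt. field. lra.
apply Rdiv_le_0_compat; lra.
Qed.

Lemma gaff (P : nat -> R) lam x : 0 < lam -> 0 <= P x ->
  Po lam x * sqrt (P x / Po lam x) = sqrt (P x * Po lam x).
Proof.
intros hl hp. pose proof (Po_pos lam x hl) as hq.
replace (P x * Po lam x) with ((P x / Po lam x) * (Po lam x * Po lam x)) by (field; lra).
rewrite sqrt_mult, sqrt_square; try lra.
apply Rdiv_le_0_compat; lra.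
apply Rmult_le_pos; lra.
Qed.

Lemma term_le (P : nat -> R) lam k : 0 < lam -> (forall x, 0 <= P x) ->
  (P k = 0 -> P (k+1)%nat = 0) ->
  Po lam k * (sqrt (P (S k) / Po lam (S k)) - sqrt (P k / Po lam k)) ^ 2
   <= fisher_term P lam k.
Proof.
intros hl hP hbad. unfold fisher_term.
pose proof (Po_pos lam k hl) as hq. pose proof (Po_pos lam (S k) hl) as hq1.
destruct (Req_EM_T (P k) 0) as [e|ne].
- pose proof (hbad e) as e1. rewrite Nat.add_1_r in e1. rewrite e, e1.
  unfold Rdiv. rewrite !Rmult_0_l, sqrt_0. lra.
- assert (pk : 0 < P k) by (pose proof (hP k); lra).
  rewrite Nat.add_1_r.
  set (a := sqrt (P (S k) / Po lam (S k))).
  set (b := sqrt (P k / Po lam k)).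
  assert (ha : 0 <= a) by apply sqrt_pos.
  assert (hb : 0 < b) by (apply sqrt_lt_R0; apply Rdiv_lt_0_compat; lra).
  assert (ea : P (S k) = Po lam (S k) * a ^ 2) by (unfold a; rewrite gsq; auto).
  assert (eb : P k = Po lam k * b ^ 2) by (unfold b; rewrite gsq; auto).
  pose proof (Po_rec lam k hl) as er.
  replace (INR (S k) * P (S k) / lam - P k) with (Po lam k * (a ^ 2 - b ^ 2)).
  2:{ rewrite ea, eb. rewrite <- Rmult_assoc, er. field. lra. }
  rewrite eb.
  replace ((Po lam k * (a ^ 2 - b ^ 2)) ^ 2 / (Po lam k * b ^ 2)) with
    (Po lam k * (a - b) ^ 2 + Po lam k * (a - b) ^ 2 * (a * (a + 2 * b)) / b ^ 2).
  2:{ field. lra. }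
  assert (0 <= Po lam k * (a - b) ^ 2 * (a * (a + 2 * b)) / b ^ 2).
  { apply Rdiv_le_0_compat; [|apply pow_lt; lra].
    apply Rmult_le_pos; [apply Rmult_le_pos; [lra|apply pow2_ge_0]|].
    apply Rmult_le_pos; lra. }
  lra.
Qed.

Lemma sqrt_amgm a b : 0 <= a -> 0 <= b -> sqrt (a * b) <= (a + b) / 2.
Proof.
intros ha hb. rewrite sqrt_mult by lra.
pose proof (sqrt_sqrt a ha). pose proof (sqrt_sqrt b hb).
pose proof (pow2_ge_0 (sqrt a - sqrt b)). nra.
Qed.

Lemma lim_nonneg (a : nat -> R) l : (forall k, 0 <= a k) -> is_series a l -> 0 <= l.
Proof.
intros H Hs.
assert (Rbar_le 0 l).
{ apply (is_lim_seq_le (fun _ => 0) (sum_n a)).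
  - intros n; apply sum_n_nonneg'; auto.
  - apply is_lim_seq_const.
  - exact Hs. }
exact H0.
Qed.

Lemma key_ineq (P : nat -> R) lam : 0 < lam -> is_pmf_mean P lam ->
  (forall x, P x = 0 -> P (x + 1)%nat = 0) ->
  ex_series (fisher_term P lam) ->
  1 - (hell_aff P lam) ^ 2 <= lam * Series (fisher_term P lam).
Proof.
intros hl [HP0 [HP1 Hmean]] hbad hex.
set (q := Po lam).
set (g := fun x => sqrt (P x / q x)).
assert (hq : forall x, 0 < q x) by (intros; apply Po_pos; auto).
assert (Haffex : ex_series (fun x => sqrt (P x * q x))).
{ apply (@ex_series_le R_AbsRing R_CompleteNormedModule _ (fun x => (P x + q x) / 2)).
  - intros n. unfold norm; simpl. unfold abs; simpl.
    rewrite Rabs_pos_eq by apply sqrt_pos. apply sqrt_amgm; auto. left; auto.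
  - pose proof (is_series_plus _ _ _ _ HP1 (Po_series lam hl)) as H2.
    pose proof (@is_series_scal R_AbsRing R_NormedModule (/2) _ _ H2) as H3.
    eexists. eapply is_series_ext; [|exact H3].
    intros n; simpl. unfold scal, plus, mult; simpl. unfold mult, plus; simpl. unfold q; lra. }
pose proof (Series_correct _ Haffex) as Hmu.
pose proof (Series_correct _ hex) as HT.
assert (Hq1 := Po_series lam hl).
assert (HS2 : is_series (fun x => q x * g x ^ 2) 1).
{ eapply is_series_ext; [|exact HP1]. intros n. unfold g, q. rewrite gsq; auto. }
assert (HM : is_series (fun x => q x * g x) (hell_aff P lam)).
{ eapply is_series_ext; [|exact Hmu]. intros n. unfold g, q. rewrite gaff; auto. }
assert (Hle : Rbar_le (1 * 1 - hell_aff P lam ^ 2) (lam * 1 * Series (fisher_term P lam))).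
{ apply (is_lim_seq_le
   (fun N => sum_n (fun x => q x * g x ^ 2) N * sum_n q N - (sum_n (fun x => q x * g x) N) ^ 2)
   (fun N => lam * sum_n q N * sum_n (fisher_term P lam) N)).
  - intros N.
    eapply Rle_trans.
    + apply (@FinPart.poincare_R q g lam N).
      * lra.
      * intros k; left; auto.
      * intros n; apply Po_rec; auto.
    + apply Rmult_le_compat_l.
      * apply Rmult_le_pos; [lra|]. apply sum_n_nonneg'; intros; left; auto.
      * apply sum_n_le'. intros k. apply term_le; auto.
  - apply is_lim_seq_minus'.
    + apply is_lim_seq_mult'; [exact HS2| exact Hq1].
    + replace (hell_aff P lam ^ 2) with (hell_aff P lam * hell_aff P lam) by ring.
      eapply is_lim_seq_ext; [|apply is_lim_seq_mult'; [exact HM|exact HM]].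
      intros n; simpl. rewrite Rmult_1_r; reflexivity.
  - apply is_lim_seq_mult'; [|exact HT].
    apply is_lim_seq_mult'; [apply is_lim_seq_const| exact Hq1]. }
simpl in Hle. lra.
Qed.

Lemma aff_ex (P : nat -> R) lam : 0 < lam -> is_pmf_mean P lam ->
  ex_series (fun x => sqrt (P x * Po lam x)).
Proof.
intros hl [HP0 [HP1 Hmean]].
apply (@ex_series_le R_AbsRing R_CompleteNormedModule _ (fun x => (P x + Po lam x) / 2)).
- intros n. unfold norm; simpl. unfold abs; simpl.
  rewrite Rabs_pos_eq by apply sqrt_pos. apply sqrt_amgm; auto. left; apply Po_pos; auto.
- pose proof (is_series_plus _ _ _ _ HP1 (Po_series lam hl)) as H2.
  pose proof (@is_series_scal R_AbsRing R_NormedModule (/2) _ _ H2) as H3.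
  eexists. eapply is_series_ext; [|exact H3].
  intros n; simpl. unfold scal, plus, mult; simpl. unfold mult, plus; simpl. lra.
Qed.

Theorem mainTheorem5 (P : nat -> R) (lam : R) :
  0 < lam -> is_pmf_mean P lam ->
  Rbar_le (Finite (1 - (hell_aff P lam) ^ 2)) (scaledFisher P lam) /\
  is_series (fun x => (sqrt (P x) - sqrt (Po lam x)) ^ 2) (2 - 2 * hell_aff P lam) /\
  Rbar_le (Finite (2 - 2 * hell_aff P lam)) (Rbar_mult 2 (scaledFisher P lam)).
Proof.
intros hl hpm.
pose proof hpm as [HP0 [HP1 Hmean]].
pose proof (Series_correct _ (aff_ex P lam hl hpm)) as Hmu.
fold (hell_aff P lam) in Hmu.
assert (Hsq : is_series (fun x => (sqrt (P x) - sqrt (Po lam x)) ^ 2) (2 - 2 * hell_aff P lam)).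
{ pose proof (is_series_plus _ _ _ _ HP1 (Po_series lam hl)) as H2.
  pose proof (@is_series_scal R_AbsRing R_NormedModule 2 _ _ Hmu) as H3.
  pose proof (is_series_minus _ _ _ _ H2 H3) as H4.
  replace (2 - 2 * hell_aff P lam) with (plus (plus 1 1) (opp (scal 2 (hell_aff P lam)))).
  2:{ unfold scal, plus, opp, mult; simpl. unfold mult, plus, opp; simpl. lra. }
  eapply is_series_ext; [|exact H4].
  intros n; simpl. unfold scal, plus, opp, mult; simpl. unfold mult, plus, opp; simpl.
  pose proof (HP0 n) as h1. pose proof (Po_pos lam n hl) as h2.
  rewrite sqrt_mult by lra.
  pose proof (sqrt_sqrt _ h1). pose proof (sqrt_sqrt (Po lam n) (Rlt_le _ _ h2)).
  simpl. nra. }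
assert (Hmu0 : 0 <= hell_aff P lam).
{ apply (lim_nonneg _ _ (fun k => sqrt_pos _) Hmu). }
assert (Hmu1 : 0 <= 2 - 2 * hell_aff P lam).
{ apply (lim_nonneg _ _ (fun k => pow2_ge_0 _) Hsq). }
assert (Hmain : Rbar_le (Finite (1 - (hell_aff P lam) ^ 2)) (scaledFisher P lam)).
{ unfold scaledFisher.
  destruct (excluded_middle_informative _) as [hb|hb]; [simpl; auto|].
  destruct (excluded_middle_informative _) as [he|he]; [|simpl; auto].
  simpl. apply key_ineq; auto.
  intros x e. destruct (Req_EM_T (P (x+1)%nat) 0) as [e'|e']; auto.
  exfalso; apply hb; exists x; auto. }
split; [exact Hmain|]. split; [exact Hsq|].
destruct (scaledFisher P lam) as [K| |] eqn:HK; simpl in Hmain |- *.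
- nra.
- destruct (Rle_dec 0 2) as [r|r]; [|lra].
  destruct (Rle_lt_or_eq_dec 0 2 r) as [r'|r']; [simpl; auto|lra].
- contradiction.
Qed.
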